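(* Identify the tangent space of $\mathbb OH^2$ at $P_0=(0,0)$ with $\mathbb O^2$, a pair $(a,b)$ corresponding to the tangent vector with $du=a$, $dv=b$. Then the Riemann curvature tensor of $\mathbb OH^2$ at $P_0$ is $$\begin{aligned}R\big((a,b),(c,d),(e,f),(g,h)\big)=-\Big[&\,4\langle a,e\rangle\langle c,g\rangle-4\langle c,e\rangle\langle a,g\rangle+4\langle b,f\rangle\langle d,h\rangle-4\langle d,f\rangle\langle b,h\rangle\\&-\langle e\bar d,g\bar b\rangle+\langle e\bar b,g\bar d\rangle-\langle c\bar f,a\bar h\rangle+\langle a\bar f,c\bar h\rangle-\langle a\bar d-c\bar b,\ g\bar f-e\bar h\rangle\Big],\end{aligned}$$ i.e. the negative of the curvature tensor of $\mathbb OP^2$ at $[1,0,0]$.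
   Context: Octonions $\mathbb O=\mathbb H\oplus\mathbb H$ with product $(q_1,q_2)(p_1,p_2)=(q_1p_1-\bar p_2q_2,\ p_2q_1+q_2\bar p_1)$, conjugation $\overline{(q_1,q_2)}=(\bar q_1,-q_2)$, $\langle a,b\rangle=\mathrm{Re}(a\bar b)$, $|a|^2=\langle a,a\rangle$. $\mathbb OH^2=\{(u,v)\in\mathbb O^2:|u|^2+|v|^2<1\}$ with the Riemannian metric whose quadratic form on tangent vectors $(du,dv)=(\xi,\eta)$ is $ds^2=\frac{|\xi|^2(1-|v|^2)+|\eta|^2(1-|u|^2)+2\mathrm{Re}[(u\bar v)(\eta\bar\xi)]}{(1-|u|^2-|v|^2)^2}$. Curvature convention: in coordinates in which first derivatives of the metric vanish at the point, $R_{\alpha\beta\gamma\delta}=\tfrac12\big[\partial_\alpha\partial_\delta g_{\beta\gamma}+\partial_\beta\partial_\gamma g_{\alpha\delta}-\partial_\beta\partial_\delta g_{\alpha\gamma}-\partial_\alpha\partial_\gamma g_{\beta\delta}\big]$. *)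

(* Defs.v *)
From Stdlib Require Import Reals.
From Coquelicot Require Import Coquelicot.
Open Scope R_scope.

Record quat := mkH { h0 : R; h1 : R; h2 : R; h3 : R }.

Definition Hadd (p q : quat) : quat :=
  mkH (h0 p + h0 q) (h1 p + h1 q) (h2 p + h2 q) (h3 p + h3 q).
Definition Hopp (p : quat) : quat := mkH (- h0 p) (- h1 p) (- h2 p) (- h3 p).
Definition Hsub (p q : quat) : quat := Hadd p (Hopp q).
Definition Hscale (r : R) (p : quat) : quat :=
  mkH (r * h0 p) (r * h1 p) (r * h2 p) (r * h3 p).
Definition Hmul (p q : quat) : quat :=
  mkH (h0 p * h0 q - h1 p * h1 q - h2 p * h2 q - h3 p * h3 q)
      (h0 p * h1 q + h1 p * h0 q + h2 p * h3 q - h3 p * h2 q)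
      (h0 p * h2 q - h1 p * h3 q + h2 p * h0 q + h3 p * h1 q)
      (h0 p * h3 q + h1 p * h2 q - h2 p * h1 q + h3 p * h0 q).
Definition Hconj (p : quat) : quat := mkH (h0 p) (- h1 p) (- h2 p) (- h3 p).

Record oct := mkO { oq1 : quat; oq2 : quat }.

Definition Oadd (x y : oct) : oct := mkO (Hadd (oq1 x) (oq1 y)) (Hadd (oq2 x) (oq2 y)).
Definition Osub (x y : oct) : oct := mkO (Hsub (oq1 x) (oq1 y)) (Hsub (oq2 x) (oq2 y)).
Definition Oscale (r : R) (x : oct) : oct := mkO (Hscale r (oq1 x)) (Hscale r (oq2 x)).
Definition Omul (x y : oct) : oct :=
  mkO (Hsub (Hmul (oq1 x) (oq1 y)) (Hmul (Hconj (oq2 y)) (oq2 x)))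
      (Hadd (Hmul (oq2 y) (oq1 x)) (Hmul (oq2 x) (Hconj (oq1 y)))).
Definition Oconj (x : oct) : oct := mkO (Hconj (oq1 x)) (Hopp (oq2 x)).
Definition ORe (x : oct) : R := h0 (oq1 x).
Definition Oinner (a b : oct) : R := ORe (Omul a (Oconj b)).
Definition Onorm2 (a : oct) : R := Oinner a a.

Definition O2 : Type := (oct * oct)%type.
Definition O2add (x y : O2) : O2 := (Oadd (fst x) (fst y), Oadd (snd x) (snd y)).
Definition O2sub (x y : O2) : O2 := (Osub (fst x) (fst y), Osub (snd x) (snd y)).
Definition O2scale (r : R) (x : O2) : O2 := (Oscale r (fst x), Oscale r (snd x)).
Definition O2zero : O2 :=
  let z := mkO (mkH 0 0 0 0) (mkH 0 0 0 0) in (z, z).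

(* Quadratic form ds^2 of the metric of OH^2 at the point p = (u,v),
   evaluated on the tangent vector X = (du,dv) = (xi,eta). *)
Definition OH2_ds2 (p X : O2) : R :=
  let u := fst p in let v := snd p in let xi := fst X in let eta := snd X in
  (Onorm2 xi * (1 - Onorm2 v) + Onorm2 eta * (1 - Onorm2 u)
     + 2 * ORe (Omul (Omul u (Oconj v)) (Omul eta (Oconj xi))))
  / (1 - Onorm2 u - Onorm2 v) ^ 2.

Definition OH2_metric (p X Y : O2) : R :=
  (OH2_ds2 p (O2add X Y) - OH2_ds2 p (O2sub X Y)) / 4.

Definition mixed2_at0 (F : O2 -> R) (V W : O2) : R :=
  Derive (fun s => Derive (fun t => F (O2add (O2scale s V) (O2scale t W))) 0) 0.

(* Riemann curvature tensor of OH^2 at P0 = (0,0), computed in the coordinates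
   (u,v) (whose metric has vanishing first derivatives at P0), with the
   convention R_{abcd} = 1/2 [d_a d_d g_bc + d_b d_c g_ad - d_b d_d g_ac - d_a d_c g_bd],
   extended multilinearly to tangent vectors X,Y,Z,W in O^2. *)
Definition OH2_curvature_at0 (X Y Z W : O2) : R :=
  / 2 * ( mixed2_at0 (fun p => OH2_metric p Y Z) X W
        + mixed2_at0 (fun p => OH2_metric p X W) Y Z
        - mixed2_at0 (fun p => OH2_metric p X Z) Y W
        - mixed2_at0 (fun p => OH2_metric p Y W) X Z ).

(* Main.v *)
Require Import Defs.
From Stdlib Require Import Reals Lra.
From Coquelicot Require Import Coquelicot.
Open Scope R_scope.
Definition Tm (x y m : oct) := ORe (Omul (Omul x (Oconj y)) m).
Ltac dO x := let q1 := fresh x in let q2 := fresh x in destruct x as [[q1 ? ? ?] [q2 ? ? ?]].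
Ltac oexp := cbv [Tm Oinner Onorm2 ORe Omul Oconj Osub Oadd Oscale Hscale Hsub Hadd Hopp Hmul Hconj oq1 oq2 Defs.h0 Defs.h1 Defs.h2 Defs.h3].
Lemma H1 x y : Onorm2 (Oadd x y) = Onorm2 (Osub x y) + 4 * Oinner x y.
Proof. dO x; dO y; oexp; ring. Qed.
Lemma H2 w c d e f : ORe (Omul w (Omul (Oadd d f) (Oconj (Oadd c e)))) =
  ORe (Omul w (Omul (Osub d f) (Oconj (Osub c e)))) + 2*(ORe (Omul w (Omul d (Oconj e))) + ORe (Omul w (Omul f (Oconj c)))).
Proof. dO w; dO c; dO d; dO e; dO f; oexp; ring. Qed.
Lemma Nc s t x y : Onorm2 (Oadd (Oscale s x) (Oscale t y)) = s^2*Onorm2 x + 2*s*t*Oinner x y + t^2*Onorm2 y.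
Proof. dO x; dO y; oexp; ring. Qed.
Lemma TTc s t x y z w m : ORe (Omul (Omul (Oadd (Oscale s x) (Oscale t y)) (Oconj (Oadd (Oscale s z) (Oscale t w)))) m)
  = s^2 * Tm x z m + s*t*(Tm x w m + Tm y z m) + t^2 * Tm y w m.
Proof. dO x; dO y; dO z; dO w; dO m; oexp; ring. Qed.

Lemma step1 u v c d e f : OH2_metric (u, v) (c, d) (e, f) =
  (Oinner c e * (1 - Onorm2 v) + Oinner d f * (1 - Onorm2 u)
   + ORe (Omul (Omul u (Oconj v)) (Omul d (Oconj e))) + ORe (Omul (Omul u (Oconj v)) (Omul f (Oconj c))))
  / (1 - Onorm2 u - Onorm2 v) ^ 2.
Proof.
 unfold OH2_metric, OH2_ds2, O2add, O2sub; cbn [fst snd].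
 rewrite (H1 c e), (H1 d f), H2. unfold Rdiv. set (Di := / (1 - Onorm2 u - Onorm2 v) ^ 2). field.
Qed.
Lemma mixed_gen (Q : R -> R -> R) n0 n1 n2 n3 d1 d2 d3 :
 (forall s t, Q s t = (n0 + n1*s^2 + n2*s*t + n3*t^2) / (1 - d1*s^2 - d2*s*t - d3*t^2)^2) ->
 Derive (fun s => Derive (fun t => Q s t) 0) 0 = n2 + 2*n0*d2.
Proof.
 intro HQ.
 assert (Hloc: locally 0 (fun s => 1 - d1*s^2 <> 0)).
 { assert (Hp : 0 < /(1+Rabs d1)) by (apply Rinv_0_lt_compat; pose proof (Rabs_pos d1); lra).
   exists (mkposreal _ Hp). intros y Hy.
   change (Rabs (y - 0) < /(1+Rabs d1)) in Hy. rewrite Rminus_0_r in Hy.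
   pose proof (Rabs_pos d1). pose proof (Rabs_pos y).
   assert (H1 : Rabs y * (1 + Rabs d1) < 1).
   { apply Rmult_lt_reg_r with (/(1+Rabs d1)). apply Hp.
     rewrite Rmult_assoc, Rinv_r by lra. lra. }
   assert (H2: Rabs (d1 * y^2) < 1).
   { rewrite Rabs_mult, <- RPow_abs. simpl. nra. }
   pose proof (Rle_abs (d1*y^2)). lra. }
 rewrite (Derive_ext_loc _ (fun s => n2*s/(1-d1*s^2)^2 + 2*(n0+n1*s^2)*d2*s/(1-d1*s^2)^3) 0).
 - apply is_derive_unique. auto_derive.
   + repeat split; simpl; lra.
   + replace (1 + - (d1 * (0 * (0 * 1)))) with 1 by ring. field.
 - eapply filter_imp; [|exact Hloc]. intros s Hs. apply is_derive_unique.
   eapply is_derive_ext. { intro t; symmetry; apply HQ. }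
   auto_derive.
   all: replace (1 - d1 * (s * (s * 1)) + - (d2 * s * 0) + - (d3 * (0 * (0 * 1)))) with (1 - d1*s^2) by ring.
   + rewrite Rmult_1_r; apply Rmult_integral_contrapositive_currified; exact Hs.
   + field. exact Hs.
Qed.
Definition mx (c d e f a b g h : oct) :=
 4*Oinner c e*Oinner a g+2*Oinner c e*Oinner b h+2*Oinner d f*Oinner a g+4*Oinner d f*Oinner b h
 + Tm a h (Omul d (Oconj e)) + Tm g b (Omul d (Oconj e)) + Tm a h (Omul f (Oconj c)) + Tm g b (Omul f (Oconj c)).

Lemma mixed_val a b c d e f g h :
  mixed2_at0 (fun p => OH2_metric p (c, d) (e, f)) (a, b) (g, h) = mx c d e f a b g h.
Proof.
 unfold mixed2_at0.
 erewrite (mixed_gen (fun s t => OH2_metric (O2add (O2scale s (a, b)) (O2scale t (g, h))) (c, d) (e, f))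
   (Oinner c e + Oinner d f)
   (- Oinner c e * Onorm2 b - Oinner d f * Onorm2 a + Tm a b (Omul d (Oconj e)) + Tm a b (Omul f (Oconj c)))
   (-2*Oinner c e*Oinner b h - 2*Oinner d f*Oinner a g + Tm a h (Omul d (Oconj e)) + Tm g b (Omul d (Oconj e)) + Tm a h (Omul f (Oconj c)) + Tm g b (Omul f (Oconj c)))
   (- Oinner c e * Onorm2 h - Oinner d f * Onorm2 g + Tm g h (Omul d (Oconj e)) + Tm g h (Omul f (Oconj c)))
   (Onorm2 a + Onorm2 b) (2*(Oinner a g + Oinner b h)) (Onorm2 g + Onorm2 h)).
 - unfold mx. ring.
 - intros s t. unfold O2add, O2scale; cbn [fst snd]. rewrite step1.
   rewrite !Nc, !TTc. unfold Rdiv. f_equal; [ring | f_equal; ring].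
Qed.
Lemma final (a b c d e f g h : oct) :
 / 2 * (mx c d e f a b g h + mx a b g h c d e f - mx a b e f c d g h - mx c d g h a b e f) =
  - ( 4 * Oinner a e * Oinner c g - 4 * Oinner c e * Oinner a g
    + 4 * Oinner b f * Oinner d h - 4 * Oinner d f * Oinner b h
    - Oinner (Omul e (Oconj d)) (Omul g (Oconj b))
    + Oinner (Omul e (Oconj b)) (Omul g (Oconj d))
    - Oinner (Omul c (Oconj f)) (Omul a (Oconj h))
    + Oinner (Omul a (Oconj f)) (Omul c (Oconj h))
    - Oinner (Osub (Omul a (Oconj d)) (Omul c (Oconj b)))
             (Osub (Omul g (Oconj f)) (Omul e (Oconj h))) ).
Proof.
dO a; dO b; dO c; dO d; dO e; dO f; dO g; dO h.
cbv [mx Tm Oinner Onorm2 ORe Omul Oconj Osub Oadd Hsub Hadd Hopp Hmul Hconj oq1 oq2 Defs.h0 Defs.h1 Defs.h2 Defs.h3].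
field.
Qed.

Theorem theorem8p4 (a b c d e f g h : oct) :
  OH2_curvature_at0 (a, b) (c, d) (e, f) (g, h) =
  - ( 4 * Oinner a e * Oinner c g - 4 * Oinner c e * Oinner a g
    + 4 * Oinner b f * Oinner d h - 4 * Oinner d f * Oinner b h
    - Oinner (Omul e (Oconj d)) (Omul g (Oconj b))
    + Oinner (Omul e (Oconj b)) (Omul g (Oconj d))
    - Oinner (Omul c (Oconj f)) (Omul a (Oconj h))
    + Oinner (Omul a (Oconj f)) (Omul c (Oconj h))
    - Oinner (Osub (Omul a (Oconj d)) (Omul c (Oconj b)))
             (Osub (Omul g (Oconj f)) (Omul e (Oconj h))) ).
Proof.
  unfold OH2_curvature_at0. rewrite !mixed_val. apply final.
Qed.
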